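(* Let $c$ be a positive measurable function on $(T,+\infty)$ such that $c(t)e^{-t}$ is decreasing on $(T,+\infty)$ and $\int_{T_1}^{+\infty}c(t)e^{-t}dt<+\infty$ for some $T_1>T$. Then there is a positive measurable function $\tilde c$ on $(T,+\infty)$ such that (1) $\tilde c\ge c$ on $(T,+\infty)$; (2) $\tilde c(t)e^{-t}$ is strictly decreasing on $(T,+\infty)$ and $\tilde c$ is increasing on $(a,+\infty)$ for some real number $a>T$; (3) $\int_{T_1}^{+\infty}\tilde c(t)e^{-t}dt<+\infty$. Moreover, if $\int_T^{+\infty}c(t)e^{-t}dt<+\infty$ and $c\in\mathcal{P}_T$, then $\tilde c$ can be chosen to satisfy (1)–(3) and in addition $\int_T^{+\infty}\tilde c(t)e^{-t}dt<+\infty$ and $\tilde c\in\mathcal{P}_T$.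
   Context: For the ''moreover'' part: $M$ is a complex manifold, $\psi$ is plurisubharmonic on $M$ with $T=-\sup_M\psi$, and $\varphi$ is Lebesgue measurable with $\varphi+\psi$ plurisubharmonic. $\mathcal{P}_T$ is the class of positive measurable functions $c$ on $(T,+\infty)$ such that $c(t)e^{-t}$ is decreasing and there is a closed subset $E\subset M$ with $E\subset\{z\in Z:\psi(z)=-\infty\}$ for some analytic subset $Z$ of $M$, such that $e^{-\varphi}c(-\psi)$ has a positive lower bound on every compact subset of $M\setminus E$. *)

(* Defs.v *)
From HB Require Import structures.
From mathcomp Require Import all_boot all_order all_algebra.
From mathcomp Require Import all_classical all_reals all_analysis.
Set Implicit Arguments. Unset Strict Implicit. Unset Printing Implicit Defensive.
Import Order.TTheory GRing.Theory Num.Theory.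
Local Open Scope classical_set_scope.
Local Open Scope ring_scope.

(* Weight functions are modelled as total functions R -> R; only their values
   on the open interval (T, +oo) matter. *)

Definition pos_meas_on (R : realType) (T : R) (c : R -> R) : Prop :=
  (forall t, T < t -> 0 < c t) /\ measurable_fun `]T, +oo[%classic c.

Definition ce_decreasing (R : realType) (T : R) (c : R -> R) : Prop :=
  forall s t, T < s -> s <= t -> c t * expR (- t) <= c s * expR (- s).

Definition ce_strictly_decreasing (R : realType) (T : R) (c : R -> R) : Prop :=
  forall s t, T < s -> s < t -> c t * expR (- t) < c s * expR (- s).

Definition increasing_after (R : realType) (a : R) (c : R -> R) : Prop :=
  forall s t, a < s -> s <= t -> c s <= c t.

Definition ce_integrable_from (R : realType) (T1 : R) (c : R -> R) : Prop :=
  (\int[@lebesgue_measure R]_(t in `[T1, +oo[%classic) (c t * expR (- t))%:E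
     < +oo)%E.

(* The class P_T, relative to the data (M, Analytic, psi, phi):
   - M is the (underlying topological space of the) complex manifold;
   - Analytic Z means "Z is an analytic subset of M";
   - psi : M -> \bar R with T = - sup_M psi;
   - phi : M -> R.
   The lower bound of e^{-phi} c(-psi) is required at the points z of K
   where c(-psi z) is defined, i.e. psi z real with -psi z in (T,+oo). *)
Definition P_T (R : realType) (M : topologicalType) (Analytic : set M -> Prop)
  (psi : M -> \bar R) (phi : M -> R) (T : R) (c : R -> R) : Prop :=
  pos_meas_on T c /\ ce_decreasing T c /\
  exists E : set M, closed E /\
    (exists Z : set M, Analytic Z /\ E `<=` Z `&` [set z | psi z = -oo%E]) /\
    forall K : set M, compact K -> K `<=` ~` E ->
      exists2 eps : R, 0 < eps &
        forall z t, K z -> psi z = (- t)%:E -> T < t ->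
          eps <= expR (- phi z) * c t.

(* Main.v *)
Require Import Defs.
From HB Require Import structures.
From mathcomp Require Import all_boot all_order all_algebra.
From mathcomp Require Import all_classical all_reals all_analysis.
From mathcomp Require Import measurable_realfun.
From mathcomp Require Import ring lra.
Import Order.TTheory GRing.Theory Num.Theory.
Local Open Scope classical_set_scope.
Local Open Scope ring_scope.
Section Shift.
Variable R : realType.
Local Notation mu := (@lebesgue_measure R).
Definition sh : measurableTypeR R -> measurableTypeR R := fun x => x - 1.
Lemma msh : measurable_fun setT sh.
Proof. exact: measurable_funD (@measurable_id _ _ _) (measurable_cst _). Qed.

Lemma sh_preimage_oc (a b : R) : sh @^-1` `]a, b]%classic = `]a + 1, b + 1]%classic.
Proof.
apply/seteqP; split => x /=; rewrite !in_itv /= /sh.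
  by rewrite ltrBrDr lerBlDr.
by rewrite ltrBrDr lerBlDr.
Qed.

Lemma sh_preimage_cc (a b : R) : sh @^-1` `[a, b]%classic = `[a + 1, b + 1]%classic.
Proof.
apply/seteqP; split => x /=; rewrite !in_itv /= /sh.
  by rewrite lerBrDr lerBlDr.
by rewrite lerBrDr lerBlDr.
Qed.

Lemma lebesgue_measure_sh (A : set R) : measurable A ->
  pushforward mu sh A = mu A.
Proof.
move=> mA; apply/esym/lebesgue_measure_unique => //=.
  exact: msh.
move=> _ _ [[a b]] _ <-.
rewrite /pushforward /= sh_preimage_oc !lebesgue_measure_itv /= !lte_fin ltrD2r.
case: ifP => // _; congr (_%:E); ring.
Qed.

Lemma integral_sh (g : R -> \bar R) (D : set R) : measurable D ->
  measurable_fun D g -> (forall x, D x -> (0 <= g x)%E) ->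
  (\int[mu]_(x in sh @^-1` D) g (sh x) = \int[mu]_(x in D) g x)%E.
Proof.
move=> mD mg g0.
rewrite -(@ge0_integral_pushforward _ _ _ _ R sh msh mu D g) //.
- apply: eq_measure_integral => //=; first exact: msh.
  by move=> _ A mA _; exact: lebesgue_measure_sh.
- by move=> x /[!inE]; exact: g0.
Qed.
End Shift.
Arguments sh {R}.

Section Construction.
Variables (R : realType) (T T1 : R) (c : R -> R).
Hypotheses (cpos : forall t, T < t -> 0 < c t) (cdec : ce_decreasing T c) (TT1 : T < T1).

Lemma in_cc (a b u : R) : `[a, b]%classic u -> a <= u /\ u <= b.
Proof. by rewrite /= in_itv /= => /andP. Qed.

Lemma cc_in (a b u : R) : a <= u -> u <= b -> `[a, b]%classic u.
Proof. by move=> au ub; rewrite /= in_itv /= au ub. Qed.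

Definition S t := [set c s | s in `[T1, t]].
Definition m t := if t < T1 then c t else sup (S t).

Lemma c_grow {s u} : T < s -> s <= u -> c u <= c s * expR (u - s).
Proof.
move=> Ts su; have := @cdec s u Ts su.
rewrite -(ler_pM2r (expR_gt0 u)) -!mulrA -expRD addNr expR0 mulr1.
by rewrite -expRD addrC.
Qed.

Lemma S_ub t : T1 <= t -> ubound (S t) (c T1 * expR (t - T1)).
Proof.
move=> T1t _ [u /in_cc[T1u ut] <-].
apply: (le_trans (c_grow TT1 T1u)).
rewrite ler_pM2l ?cpos// ler_expR; exact: lerB.
Qed.

Lemma S_n0 {t} : T1 <= t -> S t !=set0.
Proof. by move=> T1t; exists (c T1), T1 => //; rewrite /= in_itv /= lexx. Qed.

Lemma S_hs {t} : T1 <= t -> has_sup (S t).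
Proof. move=> T1t; split; [exact: S_n0|]; exists (c T1 * expR (t - T1)); exact: S_ub. Qed.

Lemma mE {t} : T1 <= t -> m t = sup (S t).
Proof. by move=> T1t; rewrite /m ltNge T1t. Qed.

Lemma c_le_m {t} : T < t -> c t <= m t.
Proof.
move=> Tt; rewrite /m; case: ltP => // T1t.
by apply: sup_upper_bound; [exact: S_hs|exists t => //; rewrite /= in_itv /= T1t lexx].
Qed.

Lemma m_gt0 {t} : T < t -> 0 < m t.
Proof. by move=> Tt; exact: lt_le_trans (cpos _ Tt) (c_le_m Tt). Qed.

Lemma mT1 : m T1 = c T1.
Proof.
rewrite mE //; apply/le_anti/andP; split; last first.
  by apply: sup_upper_bound; [exact: S_hs|exists T1 => //; rewrite /= in_itv /= lexx].
apply: ge_sup; first exact: S_n0.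
move=> _ [u /in_cc[T1u uT1] <-].
by have -> : u = T1 by apply/le_anti; rewrite T1u uT1.
Qed.

Lemma m_rel1 {s t} : T1 <= s -> s <= t -> m t <= m s * expR (t - s).
Proof.
move=> T1s st; have T1t := le_trans T1s st; have Ts := lt_le_trans TT1 T1s.
rewrite (mE T1t); apply: ge_sup; first exact: S_n0.
move=> _ [u /in_cc[T1u ut] <-].
have [us|su] := leP u s.
  apply: le_trans (_ : m s <= _).
    rewrite (mE T1s); apply: sup_upper_bound; first exact: S_hs.
    by exists u => //; rewrite /= in_itv /= T1u us.
  by rewrite ler_peMr ?(ltW (m_gt0 Ts))// -expR0 ler_expR subr_ge0.
apply: (le_trans (c_grow Ts (ltW su))).
apply: ler_pM; [exact/ltW/cpos| exact/ltW/expR_gt0 | exact: c_le_m |].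
by rewrite ler_expR lerB.
Qed.

Lemma m_rel {s t} : T < s -> s <= t -> m t <= m s * expR (t - s).
Proof.
move=> Ts st; have [T1s|sT1] := leP T1 s; first exact: m_rel1.
have hs : m s = c s by rewrite /m sT1.
have [T1t|tT1] := leP T1 t; last by rewrite hs {1}/m tT1; exact: c_grow.
apply: (le_trans (m_rel1 (lexx T1) T1t)); rewrite mT1 hs.
apply: (@le_trans _ _ (c s * expR (T1 - s) * expR (t - T1))).
  by rewrite ler_pM2r ?expR_gt0 //; exact: c_grow (ltW sT1).
by rewrite -mulrA -expRD; have -> : T1 - s + (t - T1) = t - s by ring.
Qed.

Lemma m_dec : ce_decreasing T m.
Proof.
move=> s t Ts st; have := m_rel Ts st.
rewrite -(ler_pM2r (expR_gt0 (- t))) -mulrA -expRD.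
by have -> : t - s + - t = - s by ring.
Qed.

Lemma m_nd {s t} : T1 <= s -> s <= t -> m s <= m t.
Proof.
move=> T1s st; have T1t := le_trans T1s st.
rewrite (mE T1s) (mE T1t); apply: sup_le; [|exact: S_n0 T1s|exact: S_hs T1t].
move=> _ [u /in_cc[T1u us] <-]; exists (c u); split => //.
by exists u => //; apply: cc_in => //; exact: le_trans st.
Qed.

Lemma m_rec {t} : T1 + 1 <= t -> m t <= m (t - 1) + c (t - 1) * expR 1.
Proof.
move=> T1t; have T1t1 : T1 <= t - 1 by rewrite lerBrDr.
have T1t' : T1 <= t by apply: le_trans T1t; rewrite lerDl.
have Tt1 : T < t - 1 by exact: lt_le_trans T1t1.
rewrite (mE T1t'); apply: ge_sup; first exact: S_n0.
move=> _ [u /in_cc[T1u ut] <-].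
have [ut1|t1u] := leP u (t - 1).
  rewrite -[c u]addr0; apply: lerD.
    rewrite (mE T1t1); apply: sup_upper_bound; first exact: S_hs.
    by exists u => //; exact: cc_in.
  by apply: mulr_ge0; [exact/ltW/cpos|exact: expR_ge0].
rewrite -[c u]add0r; apply: lerD; first exact/ltW/m_gt0.
apply: (le_trans (c_grow Tt1 (ltW t1u))).
rewrite ler_pM2l ?cpos // ler_expR lerBlDr.
by have -> : 1 + (t - 1) = t by ring.
Qed.

Definition ct t := m t + 1.
Definition H t := ct t * expR (- t).

Lemma ct_sdec : ce_strictly_decreasing T ct.
Proof.
move=> s t Ts st; rewrite /ct !mulrDl !mul1r.
apply: ler_ltD; first exact: m_dec (ltW st).
by rewrite ltr_expR ltrN2.
Qed.

Lemma c_le_ct {t} : T < t -> c t <= ct t.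
Proof. by move=> Tt; rewrite /ct; apply: le_trans (c_le_m Tt) _; rewrite lerDl. Qed.

Lemma ct_gt0 {t} : T < t -> 0 < ct t.
Proof. by move=> Tt; apply: lt_le_trans (c_le_ct Tt); exact: cpos. Qed.

Lemma ct_inc : increasing_after T1 ct.
Proof. by move=> s t T1s st; rewrite /ct lerD2r; apply: m_nd => //; exact: ltW. Qed.

Lemma H_ge0 {t} : T < t -> 0 <= H t.
Proof. by move=> Tt; rewrite /H mulr_ge0 ?expR_ge0 // ltW // ct_gt0. Qed.

Lemma H_dec {s t} : T < s -> s <= t -> H t <= H s.
Proof.
move=> Ts; rewrite le_eqVlt => /orP[/eqP -> //|st].
exact/ltW/ct_sdec.
Qed.

Lemma H_rec {t} : T1 + 1 <= t ->
  H t <= c (t - 1) * expR (- (t - 1)) + expR (-1) * H (t - 1).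
Proof.
move=> T1t; rewrite /H /ct.
have e : expR (- t) = expR (-1) * expR (- (t - 1)).
  by rewrite -expRD; congr expR; ring.
rewrite e; apply: (@le_trans _ _ ((m (t - 1) + c (t - 1) * expR 1 + 1) * (expR (-1) * expR (- (t - 1))))).
  by rewrite ler_pM2r ?mulr_gt0 ?expR_gt0 // lerD2r; exact: m_rec.
have e1 : expR 1 * expR (-1) = 1 :> R by rewrite -expRD subrr expR0.
rewrite le_eqVlt; apply/orP; left; apply/eqP.
set x := expR 1; set y := expR (-1); set E := expR (- (t - 1)).
have -> : (m (t - 1) + c (t - 1) * x + 1) * (y * E) =
  (m (t - 1) + 1) * y * E + c (t - 1) * (x * y) * E by ring.
rewrite e1; ring.
Qed.

Hypothesis cmeas : measurable_fun `]T, +oo[ c.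

Lemma m_meas : measurable_fun `]T, +oo[ m.
Proof.
rewrite (@itv_bndbnd_setU _ _ _ (BLeft T1)) ?bnd_simp //.
apply/measurable_funU => //; split.
- apply: (eq_measurable_fun c).
    by move=> x; rewrite inE /= in_itv /= => /andP[_ xT1]; rewrite /m xT1.
  by apply: measurable_funS cmeas => //; apply: subset_itvl.
- apply: (eq_measurable_fun (fun t : R => m (Num.max t T1))).
    move=> x; rewrite inE /= in_itv /= andbT => T1x.
    by rewrite max_l.
  apply: nondecreasing_measurable => // x y xy.
  apply: m_nd; first by rewrite le_max lexx orbT.
  by rewrite ge_max; apply/andP; split; rewrite le_max ?xy ?lexx ?orbT.
Qed.

Lemma ct_meas : measurable_fun `]T, +oo[ ct.
Proof. exact: measurable_funD m_meas (measurable_cst _). Qed.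

Lemma eN_meas (D : set R) : measurable D -> measurable_fun D (fun t : R => expR (- t)).
Proof.
move=> mD; apply: (@measurable_funS _ _ _ _ setT) => //.
exact: measurableT_comp (@measurable_expR R) (measurable_funN (@measurable_id _ _ _)).
Qed.

Lemma H_meas (D : set R) : measurable D -> D `<=` `]T, +oo[ ->
  measurable_fun D (fun t => (H t)%:E).
Proof.
move=> mD DT; apply/measurable_EFinP; apply: measurable_funM.
  exact: measurable_funS ct_meas.
exact: eN_meas.
Qed.

Lemma f_meas (D : set R) : measurable D -> D `<=` `]T, +oo[ ->
  measurable_fun D (fun t => (c t * expR (- t))%:E).
Proof.
move=> mD DT; apply/measurable_EFinP; apply: measurable_funM.
  exact: measurable_funS cmeas.
exact: eN_meas.
Qed.

Hypothesis cint : ce_integrable_from T1 c.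
Local Notation mu := (@lebesgue_measure R).
Local Notation f := (fun t => c t * expR (- t)).

Lemma f_ge0 {t} : T < t -> 0 <= f t.
Proof. by move=> Tt; rewrite mulr_ge0 ?expR_ge0 // ltW // cpos. Qed.

Definition J := (\int[mu]_(t in `[T1, +oo[) (f t)%:E)%E.

Lemma J_fin : J \is a fin_num.
Proof.
rewrite ge0_fin_numE //; apply: integral_ge0 => t /=; rewrite in_itv /= andbT => T1t.
by rewrite lee_fin; apply: f_ge0; exact: lt_le_trans T1t.
Qed.

Lemma sub_T1 (D : set R) : D `<=` `[T1, +oo[ -> D `<=` `]T, +oo[.
Proof.
move=> DT x /DT /=; rewrite !in_itv /= !andbT => T1x.
exact: lt_le_trans T1x.
Qed.

Lemma sub_cc (X : R) : `[T1, X] `<=` `[T1, +oo[.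
Proof. by apply: subset_itvl; rewrite bnd_simp. Qed.

Lemma int_le_cst (a b : R) (k : R) (g : R -> R) : a <= b ->
  `[a, b] `<=` `]T, +oo[ ->
  measurable_fun `[a, b] (fun t => (g t)%:E) ->
  (forall t, a <= t <= b -> 0 <= g t <= k) ->
  (\int[mu]_(t in `[a, b]) (g t)%:E <= (k * (b - a))%:E)%E.
Proof.
move=> ab _ mg gk.
apply: (@le_trans _ _ (\int[mu]_(t in `[a, b]) (cst k%:E) t)%E).
  apply: ge0_le_integral => //.
    by move=> t /=; rewrite in_itv /= => /gk /andP[g0 _]; rewrite lee_fin.
  by move=> t /=; rewrite in_itv /= => /gk /andP[_ gk']; rewrite lee_fin.
rewrite integral_cst //= lebesgue_measure_itv /= lte_fin.
case: ifPn => [_|]; first by rewrite -EFinD -EFinM.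
rewrite -leNgt => ba; have -> : b = a by apply/le_anti; rewrite ba ab.
by rewrite subrr mulr0 mule0.
Qed.

Lemma I_fin (X : R) : T1 <= X -> (\int[mu]_(t in `[T1, X]) (H t)%:E)%E \is a fin_num.
Proof.
move=> T1X; rewrite ge0_fin_numE; last first.
  apply: integral_ge0 => t /= /[!in_itv] /= /andP[T1t _]; rewrite lee_fin.
  by apply: H_ge0; exact: lt_le_trans T1t.
apply: (le_lt_trans (@int_le_cst T1 X (H T1) H T1X _ _ _)); last exact: ltry.
- exact: sub_T1 (sub_cc X).
- by apply: H_meas => //; exact: sub_T1 (sub_cc X).
- move=> t /andP[T1t tX]; rewrite H_ge0 /=; last exact: lt_le_trans T1t.
  exact: H_dec.
Qed.

Lemma meas_comp_sh (g : R -> R) (D : set R) : measurable D ->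
  D `<=` `[T1 + 1, +oo[ -> measurable_fun `]T, +oo[ g ->
  measurable_fun D (fun t => (g (sh t))%:E).
Proof.
move=> mD DT mg; apply/measurable_EFinP.
apply: (@measurable_comp _ _ _ _ _ _ `]T, +oo[) => //.
- move=> _ [x /DT /= + <-]; rewrite !in_itv /= !andbT /sh => T1x.
  apply: lt_le_trans TT1 _; by rewrite lerBrDr.
- exact: measurable_funS (@msh R).
Qed.

Lemma disj_co_cc (a b d : R) : [disjoint `[a, b[ & `[b, d]].
Proof.
rewrite disj_set2E; apply/eqP/seteqP; split => x //= [].
rewrite !in_itv /= => /andP[_ xb] /andP[bx _].
by move: (lt_le_trans xb bx); rewrite ltxx.
Qed.

Lemma fmeasT : measurable_fun `]T, +oo[ f.
Proof. by apply: measurable_funM cmeas _; exact: eN_meas. Qed.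

Lemma HmeasT : measurable_fun `]T, +oo[ H.
Proof. by apply: measurable_funM ct_meas _; exact: eN_meas. Qed.

Lemma I_rec (X : R) : T1 + 1 <= X ->
  (\int[mu]_(t in `[T1, X]) (H t)%:E <=
   (H T1)%:E + J + (expR (-1))%:E * \int[mu]_(t in `[T1, X]) (H t)%:E)%E.
Proof.
move=> T1X.
have T1T11 : T1 <= T1 + 1 by rewrite lerDl.
have T1X' : T1 <= X := le_trans T1T11 T1X.
have Hge0 (D : set R) : D `<=` `[T1, +oo[ -> forall t, D t -> (0 <= (H t)%:E)%E.
  by move=> DT t /DT Dt; rewrite lee_fin; apply: H_ge0; by move: Dt; rewrite /= in_itv /= andbT; exact: lt_le_trans.
have sub1 : `[T1 + 1, X] `<=` `[T1, +oo[.
  by apply: subset_itv; rewrite bnd_simp.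
have sub0 : `[T1, T1 + 1[ `<=` `[T1, +oo[.
  by apply: subset_itv; rewrite bnd_simp.
rewrite {1}(@itv_bndbnd_setU _ _ (BLeft T1) (BLeft (T1 + 1)) (BRight X)) ?bnd_simp //.
rewrite ge0_integral_setU //; last 3 first.
- apply: H_meas; first exact: measurableU.
  move=> x [|]; rewrite /= !in_itv /= => /andP[h _]; rewrite andbT.
    exact: lt_le_trans h.
  by apply: lt_le_trans h; apply: lt_le_trans T1T11.
- move=> x [|]; rewrite /= !in_itv /= => /andP[h _]; rewrite lee_fin; apply: H_ge0.
    exact: lt_le_trans h.
  by apply: lt_le_trans h; apply: lt_le_trans T1T11.
- exact: disj_co_cc.
have hA : (\int[mu]_(t in `[T1, (T1 + 1)%R[) (H t)%:E <= (H T1)%:E)%E.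
  have h1 : (\int[mu]_(t in `[T1, (T1 + 1)%R[) (H t)%:E <= \int[mu]_(t in `[T1, (T1 + 1)%R]) (H t)%:E)%E.
    apply: ge0_subset_integral => //.
    - by apply: H_meas => //; apply: sub_T1; exact: sub_cc.
    - by apply: Hge0; exact: sub_cc.
    - by apply: subset_itv; rewrite bnd_simp.
  apply: (le_trans h1).
  apply: (le_trans (@int_le_cst T1 (T1 + 1) (H T1) H T1T11 _ _ _)).
  - by apply: sub_T1; exact: sub_cc.
  - by apply: H_meas => //; apply: sub_T1; exact: sub_cc.
  - move=> t /andP[T1t tX]; rewrite H_ge0 /=; last exact: lt_le_trans T1t.
    exact: H_dec.
  by rewrite addrC addKr mulr1.
have hB : (\int[mu]_(t in `[(T1 + 1)%R, X]) (H t)%:E <=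
    J + (expR (-1)%R)%:E * \int[mu]_(t in `[T1, X]) (H t)%:E)%E.
  have E : `[T1 + 1, X]%classic = sh @^-1` `[T1, X - 1] by rewrite sh_preimage_cc subrK.
  have subS : `[(T1 + 1)%R, X] `<=` `[T1 + 1, +oo[ by apply: subset_itvl; rewrite bnd_simp.
  have T1X1 : T1 <= X - 1 by rewrite lerBrDr.
  have mF : measurable_fun `[(T1 + 1)%R, X] (fun t => (f (sh t))%:E).
    exact: meas_comp_sh fmeasT.
  have mG : measurable_fun `[(T1 + 1)%R, X] (fun t => (expR (-1)%R)%:E * (H (sh t))%:E)%E.
    apply: (eq_measurable_fun (fun t => (expR (-1)%R * H (sh t))%:E)).
      by move=> t _; rewrite EFinM.
    exact: meas_comp_sh (measurable_funM (measurable_cst _) HmeasT).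
  have F0 : forall t, `[(T1 + 1)%R, X]%classic t -> (0 <= (f (sh t))%:E)%E.
    move=> t /=; rewrite in_itv /= /sh => /andP[h _]; rewrite lee_fin; apply: f_ge0.
    by apply: lt_le_trans TT1 _; rewrite lerBrDr.
  have G0 : forall t, `[(T1 + 1)%R, X]%classic t -> (0 <= (expR (-1)%R)%:E * (H (sh t))%:E)%E.
    move=> t /=; rewrite in_itv /= /sh => /andP[h _]; rewrite -EFinM lee_fin.
    apply: mulr_ge0; first exact: expR_ge0.
    by apply: H_ge0; apply: lt_le_trans TT1 _; rewrite lerBrDr.
  have step1 : (\int[mu]_(t in `[(T1 + 1)%R, X]) (H t)%:E <=
      \int[mu]_(t in `[(T1 + 1)%R, X])
         ((f (sh t))%:E + (expR (-1)%R)%:E * (H (sh t))%:E))%E.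
    apply: ge0_le_integral => //.
    - exact: Hge0.
    - by apply: H_meas => //; exact: sub_T1.
    - exact: emeasurable_funD.
    - move=> t /=; rewrite in_itv /= => /andP[T1t _].
      by rewrite -EFinM -EFinD lee_fin; exact: H_rec.
  apply: (le_trans step1).
  rewrite ge0_integralD // ge0_integralZl_EFin //; [|
    move=> t /=; rewrite in_itv /= /sh => /andP[h _]; rewrite lee_fin;
    by apply: H_ge0; apply: lt_le_trans TT1 _; rewrite lerBrDr |
    exact: meas_comp_sh HmeasT].
  have s3 : (\int[mu]_(t in `[(T1 + 1)%R, X]) (f (sh t))%:E =
             \int[mu]_(t in `[T1, (X - 1)%R]) (f t)%:E)%E.
    rewrite E; apply: (@integral_sh R (fun t => (f t)%:E)) => //.
    - apply: f_meas => //; apply: sub_T1; exact: sub_cc.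
    - move=> t /=; rewrite in_itv /= => /andP[h _]; rewrite lee_fin; apply: f_ge0.
      exact: lt_le_trans h.
  have s4 : (\int[mu]_(t in `[(T1 + 1)%R, X]) (H (sh t))%:E =
             \int[mu]_(t in `[T1, (X - 1)%R]) (H t)%:E)%E.
    rewrite E; apply: (@integral_sh R (fun t => (H t)%:E)) => //.
    - apply: H_meas => //; apply: sub_T1; exact: sub_cc.
    - move=> t /=; rewrite in_itv /= => /andP[h _]; rewrite lee_fin; apply: H_ge0.
      exact: lt_le_trans h.
  rewrite s3 s4; apply: leeD.
    apply: ge0_subset_integral => //.
    - apply: f_meas => //; exact: sub_T1 (@subset_refl _ _).
    - move=> t /=; rewrite in_itv /= andbT => h; rewrite lee_fin; apply: f_ge0.
      exact: lt_le_trans h.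
    - exact: sub_cc.
  rewrite lee_pmul2l ?expR_gt0 //.
  apply: ge0_subset_integral => //.
  - by apply: H_meas => //; apply: sub_T1; exact: sub_cc.
  - by apply: Hge0; exact: sub_cc.
  - by apply: subset_itvl; rewrite bnd_simp lerBlDr lerDl.
by have := leeD hA hB; rewrite (addeA (H T1)%:E).
Qed.

Definition Bd := (H T1 + fine J) / (1 - expR (-1)).

Lemma I_bound (X : R) : T1 + 1 <= X ->
  (\int[mu]_(t in `[T1, X]) (H t)%:E <= Bd%:E)%E.
Proof.
move=> T1X; have T1X' : T1 <= X by apply: le_trans T1X; rewrite lerDl.
have Ifin := @I_fin X T1X'.
have := @I_rec X T1X.
move: Ifin; set I := (\int[mu]_(t in `[T1, X]) (H t)%:E)%E => Ifin.
rewrite -(fineK Ifin) -(fineK J_fin) -EFinM -!EFinD !lee_fin.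
have e1 : expR (-1) < 1 :> R by rewrite expR_lt1 ltrN10.
have e0 : 0 < 1 - expR (-1) :> R by rewrite subr_gt0.
rewrite /Bd ler_pdivlMr // => h.
set i := fine I in h *; set e := expR (-1) in e0 e1 h *.
have : i * (1 - e) = i - e * i by ring.
move=> ->; lra.
Qed.

Lemma H_int : (\int[mu]_(t in `[T1, +oo[) (H t)%:E < +oo)%E.
Proof.
pose F := fun n : nat => `[T1, T1 + 1 + n%:R]%classic.
have FT n : F n `<=` `[T1, +oo[ by exact: sub_cc.
have cvgI : (\int[mu]_(t in F n) (H t)%:E)%E @[n --> \oo] -->
            (\int[mu]_(t in \bigcup_n F n) (H t)%:E)%E.
  apply: ge0_nondecreasing_set_cvg_integral.
  - move=> n k nk; apply/subsetPset; apply: subset_itvl.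
    by rewrite bnd_simp lerD2l ler_nat.
  - by move=> n; exact: measurable_itv.
  - move=> n; apply: H_meas; first exact: measurable_itv.
    move=> t /FT /=; rewrite !in_itv /= !andbT => h.
    exact: lt_le_trans h.
  - move=> n t /FT /=; rewrite in_itv /= andbT => h; rewrite lee_fin.
    by apply: H_ge0; exact: lt_le_trans h.
have bigF : \bigcup_n F n = `[T1, +oo[%classic.
  apply/seteqP; split; first by move=> x [n _ /FT].
  move=> x /=; rewrite in_itv /= andbT => T1x.
  have x0 : 0 <= x - T1 by rewrite subr_ge0.
  exists (Num.Def.archi_bound (x - T1)) => //=.
  rewrite /F /= in_itv /= T1x /=.
  have := archi_boundP x0; lra.
rewrite -bigF -(cvg_lim _ cvgI) //.
apply: (@le_lt_trans _ _ Bd%:E); last exact: ltry.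
apply: lime_le; first by apply/cvg_ex; eexists; exact: cvgI.
apply: nearW => n; apply: I_bound.
by rewrite lerDl.
Qed.

Hypothesis cintT : ce_integrable_from T c.

Lemma H_intT : (\int[mu]_(t in `[T, +oo[) (H t)%:E < +oo)%E.
Proof.
have HmT : measurable_fun `]T, +oo[ (fun t => (H t)%:E) by exact: H_meas.
rewrite -integral_itv_obnd_cbnd //.
rewrite (@itv_bndbnd_setU _ _ (BRight T) (BLeft T1) +oo%O) ?bnd_simp //.
have sub2 : `]T, T1[ `|` `[T1, +oo[ `<=` `]T, +oo[.
  move=> x [|]; rewrite /= !in_itv /= ?andbT.
    by case/andP.
  by move=> h; exact: lt_le_trans h.
rewrite ge0_integral_setU //; [|
  by apply: measurable_funS HmT => //; exact: measurableU |
  by move=> x /sub2 /=; rewrite in_itv /= andbT => h; rewrite lee_fin; exact: H_ge0 |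
  apply/disj_set2P/seteqP; split => x //= [];
  rewrite !in_itv /= andbT => /andP[_ xT1] T1x;
  by move: (lt_le_trans xT1 T1x); rewrite ltxx].
apply: lte_add_pinfty; last exact: H_int.
have sub : `]T, T1[ `<=` `]T, +oo[ by apply: subset_itvl; rewrite bnd_simp.
have fm : measurable_fun `]T, T1[ (fun t => (f t)%:E) by exact: f_meas.
apply: (@le_lt_trans _ _ (\int[mu]_(t in `]T, T1[) ((f t)%:E + (expR (- T))%:E))%E).
  apply: ge0_le_integral => //.
  - by move=> t /sub /=; rewrite in_itv /= andbT => h; rewrite lee_fin; exact: H_ge0.
  - exact: measurable_funS HmT.
  - by apply: emeasurable_funD => //; exact: measurable_cst.
  - move=> t /=; rewrite in_itv /= => /andP[Tt tT1].
    rewrite -EFinD lee_fin /H /ct /m tT1 mulrDl mul1r lerD2l.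
    by rewrite ler_expR lerN2 ltW.
rewrite ge0_integralD //; last first.
  by move=> t /sub /=; rewrite in_itv /= andbT => h; rewrite lee_fin; exact: f_ge0.
apply: lte_add_pinfty.
  apply: (@le_lt_trans _ _ (\int[mu]_(t in `]T, +oo[) (f t)%:E)%E).
    apply: ge0_subset_integral => //; first exact: f_meas.
    by move=> t /=; rewrite in_itv /= andbT => h; rewrite lee_fin; exact: f_ge0.
  rewrite integral_itv_obnd_cbnd //; exact: f_meas.
rewrite integral_cst //= lebesgue_measure_itv /= lte_fin TT1 -EFinD -EFinM.
exact: ltry.
Qed.
End Construction.
Arguments ct {R}.

Lemma sdec_dec (R : realType) (T : R) (g : R -> R) :
  ce_strictly_decreasing T g -> ce_decreasing T g.
Proof.
move=> h s t Ts; rewrite le_eqVlt => /orP[/eqP -> //|st].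
exact/ltW/h.
Qed.

Theorem lemma2p10 (R : realType) (T : R) (c : R -> R) :
  pos_meas_on T c -> ce_decreasing T c ->
  (forall T1 : R, T < T1 -> ce_integrable_from T1 c ->
     exists ct : R -> R,
       [/\ pos_meas_on T ct,
           (forall t, T < t -> c t <= ct t),
           ce_strictly_decreasing T ct /\
             (exists2 a : R, T < a & increasing_after a ct)
         & ce_integrable_from T1 ct])
  /\
  (forall (M : topologicalType) (Analytic : set M -> Prop)
          (psi : M -> \bar R) (phi : M -> R),
     ereal_sup (range psi) = (- T)%:E ->
     ce_integrable_from T c -> P_T Analytic psi phi T c ->
     forall T1 : R, T < T1 -> ce_integrable_from T1 c ->
     exists ct : R -> R,
       [/\ pos_meas_on T ct,
           (forall t, T < t -> c t <= ct t),
           ce_strictly_decreasing T ct /\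
             (exists2 a : R, T < a & increasing_after a ct),
           ce_integrable_from T1 ct
         & ce_integrable_from T ct /\ P_T Analytic psi phi T ct]).
Proof.
move=> [cpos cmeas] cdec.
have base : forall T1 : R, T < T1 -> ce_integrable_from T1 c ->
    [/\ pos_meas_on T (ct T1 c),
        (forall t, T < t -> c t <= ct T1 c t),
        ce_strictly_decreasing T (ct T1 c) /\
          (exists2 a : R, T < a & increasing_after a (ct T1 c))
      & ce_integrable_from T1 (ct T1 c)].
  move=> T1 TT1 cint; split.
  - split; first by move=> t Tt; exact: (@ct_gt0 _ _ _ _ cpos cdec TT1).
    exact: (@ct_meas _ _ _ _ cpos cdec TT1 cmeas).
  - by move=> t Tt; exact: (@c_le_ct _ _ _ _ cpos cdec TT1).
  - split; first exact: (@ct_sdec _ _ _ _ cpos cdec TT1).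
    by exists T1 => //; exact: (@ct_inc _ _ _ _ cpos cdec TT1).
  - exact: (@H_int _ _ _ _ cpos cdec TT1 cmeas cint).
split.
  by move=> T1 TT1 cint; exists (ct T1 c); exact: base.
move=> M Analytic psi phi _ cintT [_ [_ [E [cE [EZ Klb]]]]] T1 TT1 cint.
exists (ct T1 c).
have [h1 h2 h3 h4] := base T1 TT1 cint.
split => //; split; first exact: (@H_intT _ _ _ _ cpos cdec TT1 cmeas cint cintT).
split => //; split; first by apply: sdec_dec; case: h3.
exists E; split => //; split => // K cK KE.
have [eps eps0 heps] := Klb K cK KE.
exists eps => // z t Kz psiz Tt.
apply: (le_trans (heps z t Kz psiz Tt)).
by rewrite ler_wpM2l ?expR_ge0 // h2.
Qed.
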